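(* Let $\mathfrak S$ be a commutative semiring. The set of all proper ideals, the set of all finitely generated (proper) ideals, and the set of all principal (proper) ideals of $\mathfrak S$, each endowed with the ideal topology, are connected spaces.
   Context: A semiring $(\mathfrak S,+,0,\cdot,1)$ has $(\mathfrak S,+,0)$ a commutative monoid, $(\mathfrak S,\cdot,1)$ a monoid, $0r=r0=0$, and two-sided distributivity; all semirings are commutative. An ideal is a nonempty proper subset closed under addition and under multiplication by elements of $\mathfrak S$. For a set $\sigma_{\mathfrak S}$ of ideals and an ideal $\mathfrak a$, $\mathfrak a^{\uparrow}=\{\mathfrak x\in\sigma_{\mathfrak S}\mid\mathfrak a\subseteq\mathfrak x\}$; the ideal topology on $\sigma_{\mathfrak S}$ has these sets as a subbasis of closed sets. *)

(* Defs.v *)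
From HB Require Import structures.
From mathcomp Require Import all_boot all_order all_algebra.
From mathcomp Require Import all_classical topology.
Set Implicit Arguments. Unset Strict Implicit. Unset Printing Implicit Defensive.
Import GRing.Theory.
Local Open Scope classical_set_scope.
Local Open Scope ring_scope.

Definition is_ideal (S : comPzSemiRingType) (a : set S) : Prop :=
  [/\ a !=set0, a <> setT,
      (forall x y, a x -> a y -> a (x + y)) &
      (forall r x, a x -> a (r * x))].

Definition gen_ideal (S : comPzSemiRingType) (s : seq S) : set S :=
  [set x | exists r : 'I_(size s) -> S, x = \sum_(i < size s) r i * s`_i].

Definition finitely_generated (S : comPzSemiRingType) (a : set S) : Prop :=
  exists s : seq S, a = gen_ideal s.

Definition principal (S : comPzSemiRingType) (a : set S) : Prop :=
  exists g : S, a = [set x | exists r : S, x = r * g].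

Definition ideal_space (S : comPzSemiRingType) : Type := set S.
HB.instance Definition _ (S : comPzSemiRingType) :=
  Choice.on (ideal_space S).

Definition proper_ideals (S : comPzSemiRingType) : set (ideal_space S) :=
  [set a | is_ideal a].
Definition fg_ideals (S : comPzSemiRingType) : set (ideal_space S) :=
  [set a | is_ideal a /\ finitely_generated a].
Definition principal_ideals (S : comPzSemiRingType) : set (ideal_space S) :=
  [set a | is_ideal a /\ principal a].

(* The ideal topology on a set
   sigma_S of ideals is the subspace topology on sigma_S (the traces of the
   subbasic sets a^up on sigma_S are exactly the subbasic sets of the ideal
   topology on sigma_S). *)

Definition upset (S : comPzSemiRingType) (a : set S) : set (ideal_space S) :=
  [set x : ideal_space S | a `<=` x].

HB.instance Definition _ (S : comPzSemiRingType) :=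
  @isSubBaseTopological.Build (ideal_space S) (set S)
    [set a | is_ideal a] (fun a => ~` upset a).

(* Main.v *)
Require Import Defs.
From mathcomp Require Import all_boot all_order all_algebra.
From mathcomp Require Import all_classical topology.
Local Open Scope classical_set_scope.
Import GRing.Theory.

Lemma zero_in (S : comPzSemiRingType) (x : set S) : is_ideal x -> x 0%R.
Proof. by case=> [[y xy]] _ _ /(_ 0%R y xy); rewrite GRing.mul0r. Qed.

Lemma key (S : comPzSemiRingType) (C : set (ideal_space S)) (x : ideal_space S) :
  open C -> C x -> is_ideal x -> C [set 0%R].
Proof.
move=> oC Cx ix.
move: oC Cx => [D' sD' <-] [B D'B Bx].
exists B => //.
have [F sF eB] := sD' B D'B.
move: Bx; rewrite -eB /= => Bx i Fi.
have := Bx i Fi.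
rewrite /= /upset => nax ai0; apply: nax => s /ai0 ->.
exact: zero_in.
Qed.

Lemma conn (S : comPzSemiRingType) (A : set (ideal_space S)) :
  (forall x, A x -> is_ideal x) -> (forall x, A x -> A [set 0%R]) -> connected A.
Proof.
move=> iA A0 B [x Bx] [C oC eBC] [D cD eBD].
have [Ax Cx] : A x /\ C x by rewrite eBC in Bx; case: Bx.
have B0 : B [set 0%R].
  by rewrite eBC; split; [exact: A0 Ax | exact: key oC Cx (iA _ Ax)].
apply/seteqP; split; first by rewrite eBC; apply: subIsetl.
move=> y Ay; rewrite eBD; split => //.
case: (pselect (D y)) => // nDy; exfalso.
have := @key _ _ y (closed_openC cD) nDy (iA _ Ay).
by move: B0; rewrite eBD => -[].
Qed.

Lemma zero_ideal (S : comPzSemiRingType) (x : set S) : is_ideal x -> @is_ideal S [set 0%R].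
Proof.
move=> ix; split.
- by exists 0%R.
- move=> h; case: (ix) => _ nT _ _; apply: nT; apply/seteqP; split => // y _.
  have : [set 0%R] y by rewrite h.
  by move=> /= ->; exact: zero_in ix.
- by move=> a b /= -> ->; rewrite GRing.addr0.
- by move=> r a /= ->; rewrite GRing.mulr0.
Qed.

Theorem corollary3p14 (S : comPzSemiRingType) :
  [/\ connected (@proper_ideals S),
      connected (@fg_ideals S) &
      connected (@principal_ideals S)].
Proof.
split; apply: conn.
- by move=> x.
- by move=> x ix; exact: zero_ideal ix.
- by move=> x [].
- move=> x [ix _]; split; first exact: zero_ideal ix.
  exists [::]; apply/seteqP; split => y /=.
    by move=> ->; exists (fun _ => 0%R); rewrite big_ord0.
  by move=> [r ->]; rewrite big_ord0.
- by move=> x [].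
- move=> x [ix _]; split; first exact: zero_ideal ix.
  exists 0%R; apply/seteqP; split => y /=.
    by move=> ->; exists 0%R; rewrite GRing.mulr0.
  by move=> [r ->]; rewrite GRing.mulr0.
Qed.
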